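(* Suppose $P$ is a convex, non-degenerate Euclidean polygon in $\mathbb{R}^2$ which is symmetric under rotation by $\pi$ about the origin. Then there exist $A\in SL(2,\mathbb{R})$ and $r>0$ such that $B^1(r)\subseteq A\cdot P\subseteq B^\infty(r)$.
   Context: $B^1(r)$ and $B^\infty(r)$ denote the closed balls of radius $r$ about the origin in $\mathbb{R}^2$ with respect to the $\ell^1$ and $\ell^\infty$ norms respectively. Non-degenerate means $P$ has nonempty interior (is not contained in a line). *)

(* Defs.v *)
From HB Require Import structures.
From mathcomp Require Import all_boot all_order all_algebra.
From mathcomp Require Import reals.
Set Implicit Arguments. Unset Strict Implicit. Unset Printing Implicit Defensive.
Import Order.TTheory GRing.Theory Num.Theory.
Local Open Scope ring_scope.

Definition pt (R : realType) := 'cV[R]_2.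
Definition xc (R : realType) (p : pt R) : R := p 0 0.
Definition yc (R : realType) (p : pt R) : R := p 1 0.

Definition conv_hull (R : realType) (s : seq (pt R)) : pt R -> Prop :=
  fun p => exists w : 'I_(size s) -> R,
    (forall i, 0 <= w i) /\ \sum_i w i = 1 /\ p = \sum_i w i *: s`_i.

Definition convex_polygon (R : realType) (P : pt R -> Prop) : Prop :=
  exists s : seq (pt R), forall p, P p <-> conv_hull s p.

(* Non-degenerate: nonempty interior (an open square around some point lies in P). *)
Definition nondegenerate_polygon (R : realType) (P : pt R -> Prop) : Prop :=
  exists c : pt R, exists e : R, 0 < e /\
    forall q : pt R, `|xc q - xc c| < e -> `|yc q - yc c| < e -> P q.

Definition centrally_symmetric (R : realType) (P : pt R -> Prop) : Prop :=
  forall p, P p -> P (- p).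

Definition lin_image (R : realType) (A : 'M[R]_2) (P : pt R -> Prop) : pt R -> Prop :=
  fun q => exists p, P p /\ q = A *m p.

Definition ball1 (R : realType) (r : R) : pt R -> Prop :=
  fun p => `|xc p| + `|yc p| <= r.
Definition ballinf (R : realType) (r : R) : pt R -> Prop :=
  fun p => Num.max `|xc p| `|yc p| <= r.

Definition subset_pts (R : realType) (P Q : pt R -> Prop) : Prop :=
  forall p, P p -> Q p.

(* Main.v *)
Require Import Defs.
From HB Require Import structures.
From mathcomp Require Import all_boot all_order all_algebra.
From mathcomp Require Import reals.
From mathcomp Require Import ring lra.
Import Order.TTheory GRing.Theory Num.Theory.
Local Open Scope ring_scope.

Lemma det22 (R : comNzRingType) (A : 'M[R]_2) : \det A = A 0 0 * A 1 1 - A 0 1 * A 1 0.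
Proof.
rewrite (expand_det_row _ ord0) !big_ord_recl big_ord0 addr0 /cofactor !det_mx11 !mxE /=.
rewrite !expr0 !expr1 mul1r mulN1r.
rewrite mulrN; congr (_ * A _ _ - A _ _ * A _ _); by apply: val_inj.
Qed.

Set Implicit Arguments. Unset Strict Implicit.
Section Main.
Variable R : realType.
Variable s : seq (pt R).
Local Notation n := (size s).

Definition det2 (p q : pt R) := xc p * yc q - yc p * xc q.

Lemma det2_anti p q : det2 p q = - det2 q p.
Proof. rewrite /det2; ring. Qed.

Lemma xc_sum (w : 'I_n -> R) : xc (\sum_i w i *: s`_i) = \sum_i w i * xc s`_i.
Proof. by rewrite /xc summxE; apply: eq_bigr => i _; rewrite mxE. Qed.
Lemma yc_sum (w : 'I_n -> R) : yc (\sum_i w i *: s`_i) = \sum_i w i * yc s`_i.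
Proof. by rewrite /yc summxE; apply: eq_bigr => i _; rewrite mxE. Qed.

Lemma det2_sum (w : 'I_n -> R) q :
  det2 (\sum_i w i *: s`_i) q = \sum_i w i * det2 s`_i q.
Proof.
rewrite /det2 xc_sum yc_sum !mulr_suml -sumrB; apply: eq_bigr => i _; ring.
Qed.

Lemma conv3 p q r a b c : conv_hull s p -> conv_hull s q -> conv_hull s r ->
  0 <= a -> 0 <= b -> 0 <= c -> a + b + c = 1 ->
  conv_hull s (a *: p + b *: q + c *: r).
Proof.
move=> [w1 [h1 [s1 ->]]] [w2 [h2 [s2 ->]]] [w3 [h3 [s3 ->]]] ha hb hc habc.
exists (fun i => a * w1 i + b * w2 i + c * w3 i); split; [|split].
- by move=> i; rewrite !addr_ge0 // mulr_ge0.
- by rewrite !big_split /= -!mulr_sumr s1 s2 s3 !mulr1.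
- rewrite !scaler_sumr -!big_split; apply: eq_bigr => i _.
  by rewrite !scalerDl !scalerA.
Qed.

Lemma vert (i : 'I_n) : conv_hull s s`_i.
Proof.
exists (fun j => (j == i)%:R); split; [|split].
- by move=> j; rewrite ler0n.
- by rewrite (bigD1 i) //= eqxx big1 ?addr0 // => j /negbTE ->.
- rewrite (bigD1 i) //= eqxx scale1r big1 ?addr0 // => j /negbTE ->.
  by rewrite scale0r.
Qed.

Lemma bound1 M p q : (forall i : 'I_n, `|det2 s`_i q| <= M) -> conv_hull s p ->
  `|det2 p q| <= M.
Proof.
move=> hM [w [hw [sw ->]]]; rewrite det2_sum.
apply: (le_trans (ler_norm_sum _ _ _)).
apply: (@le_trans _ _ (\sum_i w i * M)); last by rewrite -mulr_suml sw mul1r.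
apply: ler_sum => i _; rewrite normrM (ger0_norm (hw i)) ler_wpM2l //.
Qed.

Lemma bound2 M p q : (forall i j : 'I_n, `|det2 s`_i s`_j| <= M) ->
  conv_hull s p -> conv_hull s q -> `|det2 p q| <= M.
Proof.
move=> hM hp hq; apply: bound1 => // i.
rewrite det2_anti normrN; apply: bound1 => // j.
Qed.


Definition mkpt (x y : R) : pt R := \col_(i < 2) (if i == 0 then x else y).
Lemma xc_mk x y : xc (mkpt x y) = x. Proof. by rewrite /xc mxE. Qed.
Lemma yc_mk x y : yc (mkpt x y) = y. Proof. by rewrite /yc mxE. Qed.


Lemma key (c : pt R) (e : R) : 0 < e ->
  (forall q : pt R, `|xc q - xc c| < e -> `|yc q - yc c| < e -> conv_hull s q) ->
  exists u v, conv_hull s u /\ conv_hull s v /\ 0 < det2 u v /\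
    forall p q, conv_hull s p -> conv_hull s q -> `|det2 p q| <= det2 u v.
Proof.
move=> he hsq.
have hc : conv_hull s c by apply: hsq; rewrite subrr normr0.
have hn : (0 < n)%N.
  case: hc => w [_ [sw _]]; move: sw; case: (size s) w => [|m] w //.
  by rewrite big_ord0 => /eqP; rewrite eq_sym oner_eq0.
pose k0 := (Ordinal hn, Ordinal hn).
pose F (k : 'I_n * 'I_n) : R := `|det2 s`_k.1 s`_k.2|.
case: (@arg_maxP _ _ _ k0 xpredT F erefl) => k _ hk.
have hall : forall i j : 'I_n, `|det2 s`_i s`_j| <= F k.
  by move=> i j; exact: (hk (i, j)).
have hM : 0 < F k.
  rewrite lt_neqAle normr_ge0 andbT; apply/negP => /eqP h0.
  have z : forall p q, conv_hull s p -> conv_hull s q -> det2 p q = 0.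
    move=> p q hp hq; have H : `|det2 p q| <= F k by apply: bound2.
    by apply/eqP; rewrite -normr_eq0 eq_le normr_ge0 andbT h0.
  pose d := e / 2.
  have hd : 0 < d by rewrite divr_gt0.
  have hde : d < e by rewrite /d; lra.
  pose q0 := mkpt (xc c) (yc c).
  pose q1 := mkpt (xc c + d) (yc c).
  pose q2 := mkpt (xc c) (yc c + d).
  have h0' : conv_hull s q0 by apply: hsq; rewrite ?xc_mk ?yc_mk subrr normr0.
  have h1 : conv_hull s q1 by apply: hsq; rewrite ?xc_mk ?yc_mk ?subrr ?normr0 // addrC addKr gtr0_norm.
  have h2 : conv_hull s q2 by apply: hsq; rewrite ?xc_mk ?yc_mk ?subrr ?normr0 // addrC addKr gtr0_norm.
  have := z _ _ h1 h2; have := z _ _ h1 h0'; have := z _ _ h0' h2; have := z _ _ h0' h0'.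
  rewrite /det2 !xc_mk !yc_mk => a1 a2 a3 a4.
  have : d * d = 0 by nra.
  by move/eqP; rewrite mulf_eq0 orbb gt_eqF.
have [hpos|hneg] := ltrP 0 (det2 s`_k.1 s`_k.2).
  exists s`_k.1, s`_k.2; split; [exact: vert|split; [exact: vert|split => //]].
  move=> p q hp hq; rewrite -(gtr0_norm hpos); exact: bound2.
have hneg' : det2 s`_k.1 s`_k.2 < 0.
  by rewrite lt_neqAle hneg andbT; apply/eqP => h; move: hM; rewrite /F h normr0 ltxx.
exists s`_k.2, s`_k.1; split; [exact: vert|split; [exact: vert|]].
rewrite det2_anti oppr_gt0 hneg'; split => // p q hp hq.
rewrite -(ltr0_norm hneg'); exact: bound2.
Qed.


Lemma pt_eq (p q : pt R) : xc p = xc q -> yc p = yc q -> p = q.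
Proof.
move=> hx hy; apply/matrixP => i j; rewrite (ord1 j).
case: i => [[|[|m]] hi] //.
- by have -> : Ordinal hi = 0 by apply: val_inj.
- by have -> : Ordinal hi = 1 by apply: val_inj.
Qed.

Lemma xc_mul (A : 'M[R]_2) (p : pt R) : xc (A *m p) = A 0 0 * xc p + A 0 1 * yc p.
Proof.
rewrite /xc /yc mxE !big_ord_recl big_ord0 addr0.
by congr (_ * _ + A _ _ * p _ _); apply: val_inj.
Qed.
Lemma yc_mul (A : 'M[R]_2) (p : pt R) : yc (A *m p) = A 1 0 * xc p + A 1 1 * yc p.
Proof.
rewrite /xc /yc mxE !big_ord_recl big_ord0 addr0.
by congr (_ * _ + A _ _ * p _ _); apply: val_inj.
Qed.

Lemma xc_lin a b (u v : pt R) : xc (a *: u + b *: v) = a * xc u + b * xc v.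
Proof. by rewrite /xc !mxE. Qed.
Lemma yc_lin a b (u v : pt R) : yc (a *: u + b *: v) = a * yc u + b * yc v.
Proof. by rewrite /yc !mxE. Qed.

Lemma signpt a (w : pt R) : conv_hull s w -> conv_hull s (- w) ->
  exists w', conv_hull s w' /\ a *: w = `|a| *: w'.
Proof.
move=> h1 h2; have [ha|ha] := lerP 0 a.
  by exists w; rewrite ger0_norm.
by exists (- w); rewrite ltr0_norm // scaleNr scalerN opprK.
Qed.

End Main.
Unset Implicit Arguments.

Theorem lemma6p5 (R : realType) (P : pt R -> Prop) :
  convex_polygon P -> nondegenerate_polygon P -> centrally_symmetric P ->
  exists (A : 'M[R]_2) (r : R),
    \det A = 1 /\ 0 < r /\
    subset_pts (ball1 r) (lin_image A P) /\ subset_pts (lin_image A P) (ballinf r).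
Proof.
move=> [s hs] [c [e [he hsq]]] hsym.
have hsq' : forall q : pt R, `|xc q - xc c| < e -> `|yc q - yc c| < e -> conv_hull s q.
  by move=> q h1 h2; apply/hs; apply: hsq.
have [u [v [hu [hv [hD hmax]]]]] := key he hsq'.
have hneg : forall w, conv_hull s w -> conv_hull s (- w).
  by move=> w /hs /hsym /hs.
set D := det2 u v in hD hmax.
set t := Num.sqrt D.
have ht : 0 < t by rewrite sqrtr_gt0.
have htD : t ^+ 2 = D by rewrite sqr_sqrtr // ltW.
set k := t / D.
have hk : 0 < k by rewrite divr_gt0.
pose A : 'M[R]_2 := \matrix_(i < 2, j < 2) (k *
  (if i == 0 then (if j == 0 then yc v else - xc v) else (if j == 0 then - yc u else xc u))).
have A00 : A 0 0 = k * yc v by rewrite mxE.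
have A01 : A 0 1 = k * - xc v by rewrite mxE.
have A10 : A 1 0 = k * - yc u by rewrite mxE.
have A11 : A 1 1 = k * xc u by rewrite mxE.
have hDne : D != 0 by rewrite gt_eqF.
have htne : t != 0 by rewrite gt_eqF.
exists A, t; split; [|split => //; split].
- rewrite det22 A00 A01 A10 A11.
  have -> : k * yc v * (k * xc u) - k * - xc v * (k * - yc u) = k ^+ 2 * D.
    by rewrite /D /det2; ring.
  by rewrite /k expr_div_n htD; field.
- move=> q; rewrite /ball1 => hq.
  pose a := xc q / t; pose b := yc q / t.
  have hab : `|a| + `|b| <= 1.
    have hti : 0 < t^-1 by rewrite invr_gt0.
    rewrite /a /b !normrM !(gtr0_norm hti) -mulrDl ler_pdivrMr // mul1r.
    by [].
  have [u' [hu' eu]] := signpt a hu (hneg _ hu).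
  have [v' [hv' ev]] := signpt b hv (hneg _ hv).
  have h0 : conv_hull s 0.
    have := conv3 hu (hneg _ hu) hu (a:=1/2) (b:=1/2) (c:=0).
    rewrite scale0r addr0 scalerN subrr addr0 => H; apply: H => //; lra.
  exists (a *: u + b *: v); split.
    apply/hs; rewrite eu ev.
    have := conv3 hu' hv' h0 (normr_ge0 a) (normr_ge0 b) (c := 1 - `|a| - `|b|).
    rewrite scaler0 addr0; apply; lra.
  move: hDne; rewrite /D /det2 => hDne'.
  apply: pt_eq.
    by rewrite xc_mul A00 A01 xc_lin yc_lin /a /b /k /D /det2; field; rewrite htne hDne'.
  by rewrite yc_mul A10 A11 xc_lin yc_lin /a /b /k /D /det2; field; rewrite htne hDne'.
- move=> q [p [hp ->]]; rewrite /ballinf.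
  have hp' : conv_hull s p by apply/hs.
  have e1 : xc (A *m p) = k * det2 p v by rewrite xc_mul A00 A01 /det2; ring.
  have e2 : yc (A *m p) = k * det2 u p by rewrite yc_mul A10 A11 /det2; ring.
  have b1 : `|xc (A *m p)| <= t.
    rewrite e1 normrM (gtr0_norm hk).
    apply: (le_trans (ler_wpM2l (ltW hk) (hmax _ _ hp' hv))).
    by rewrite /k divfK.
  have b2 : `|yc (A *m p)| <= t.
    rewrite e2 normrM (gtr0_norm hk).
    apply: (le_trans (ler_wpM2l (ltW hk) (hmax _ _ hu hp'))).
    by rewrite /k divfK.
  by rewrite ge_max b1 b2.
Qed.
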